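(* In every execution of the protocol Fever, let $v$ be an initial view and let $\mathtt t$ be the first time at which any correct processor enters a view $\ge v$. Then: (i) some correct processor enters view $v$ at time $\mathtt t$; (ii) no correct processor enters any view $v'>v$ at time $\mathtt t$; (iii) $c(p)\le\mathtt c_v$ for every correct processor $p$ at time $\mathtt t$.
   Context: Model. There is a set $\Pi=\{p_0,\dots,p_{n-1}\}$ of $n$ processors, and $t$ is the largest integer $<n/3$. At most $t$ processors are Byzantine (arbitrary behaviour); the others are correct. Authenticated channels, unforgeable signatures and threshold signatures are assumed. Partial synchrony holds with a known $\Delta$ and an unknown $GST$. Each processor $p$ has a local clock $c(p)$. All clocks advance at the same rate as real time, except when the protocol forwards them. Partial initial clock synchronisation holds: for every correct $p$, at the start at least $t+1$ correct processors $p'$ satisfy $c(p')\ge c(p)-\Gamma$, for a known $\Gamma\ge2\Delta$. Underlying protocol. Views $v\in\mathbb N_{\ge0}$; a fixed integer $k\ge3$; $\mathtt{lead}(v)=p_i$ with $i=\lfloor v/k\rfloor\bmod n$; $v$ is initial iff $v\bmod k=0$. A quorum certificate (QC) for view $v$ is a threshold signature of $n-t$ distinct processors, and a correct processor contributes to a QC for view $v$ only while in view $v$. Protocol Fever. Set $\mathtt c_v=\Gamma v$. Each correct processor $p$ keeps a current view (initially $0$) and behaves as follows. (a) When $c(p)=\mathtt c_v$ for an initial view $v$, $p$ enters view $v$ and sends a $\mathtt{view}\ v$ message (the value $v$ signed by $p$) to $\mathtt{lead}(v)$. (b) Upon first seeing a QC for a view $v'$ at least its current view, $p$ enters view $v'+1$,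 and if $c(p)<\mathtt c_{v'+1}$ it sets $c(p):=\mathtt c_{v'+1}$. (c) Upon first seeing a view certificate (VC) for an initial view $v'$ greater than its current view, $p$ enters view $v'$, and if $c(p)<\mathtt c_{v'}$ it sets $c(p):=\mathtt c_{v'}$. (d) If $p=\mathtt{lead}(v')$ for some $v'$ at least its current view, then upon first receiving $\mathtt{view}\ v'$ messages from $t+1$ distinct processors, $p$ combines them into a threshold signature, the VC for view $v'$, and sends it to all processors (including itself). *)

(* Defs.v *)
From mathcomp Require Import all_boot.
From Stdlib Require Import Reals.

Set Implicit Arguments.
Unset Strict Implicit.
Unset Printing Implicit Defensive.

(* t = the largest integer < n/3 (for n >= 1). *)
Definition tf (n : nat) : nat := (n.-1 %/ 3)%N.

Definition cv (Gamma : R) (v : nat) : R := (Gamma * INR v)%R.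

Definition initial (k v : nat) : Prop := (v %% k = 0)%N.

(* Global state of an execution.  Byzantine components of per-processor
   fields are meaningless (never constrained). *)
Record State (n : nat) := mkState {
  now     : R;
  clk     : 'I_n -> R;
  cur     : 'I_n -> nat;
  started : 'I_n -> bool;
  fired   : 'I_n -> nat -> bool;    (* rule (a) already executed for (p,v) *)
  viewSig : 'I_n -> nat -> option R;(* time q first signed "view v" *)
  voteSig : 'I_n -> nat -> option R;(* time q first contributed to a QC for v *)
  seenQC  : 'I_n -> nat -> bool;
  seenVC  : 'I_n -> nat -> bool
}.

Inductive label (n : nat) :=
| Silent
| Enter of 'I_n & nat.

Arguments Silent {n}.

Definition upd (n : nat) (A : Type) (f : 'I_n -> A) (p : 'I_n) (a : A) :=
  fun q => if q == p then a else f q.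

Definition upd2 (n : nat) (A : Type) (f : 'I_n -> nat -> A) (p : 'I_n) (v : nat)
  (a : A) :=
  fun q w => if (q == p) && (w == v) then a else f q w.

Definition sign (n : nat) (sg : 'I_n -> nat -> option R) (p : 'I_n) (v : nat)
  (tau : R) :=
  upd2 sg p v (match sg p v with Some x => Some x | None => Some tau end).

Definition signed_before (n : nat) (sg : 'I_n -> nat -> option R) (q : 'I_n)
  (v : nat) (tau : R) : Prop :=
  match sg q v with Some x => (x < tau)%R | None => False end.

(* A certificate (threshold signature) for view v built from [m] distinct
   signers is available at time tau when m distinct processors signed
   (strictly) before tau. *)
Definition cert_avail (n : nat) (sg : 'I_n -> nat -> option R) (m v : nat)
  (tau : R) : Prop :=
  exists S : {set 'I_n}, (m <= #|S|)%N /\ forall q, q \in S -> signed_before sg q v tau.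

Section Fever.
Variables (n k : nat) (Gamma : R) (B : {set 'I_n}).


Definition QC_avail (s : State n) (v : nat) : Prop :=
  cert_avail (voteSig s) (n - tf n) v (now s).

Definition VC_avail (s : State n) (v : nat) : Prop :=
  cert_avail (viewSig s) (tf n).+1 v (now s).

Definition set_clk (s : State n) (c : 'I_n -> R) : State n :=
  mkState (now s) c (cur s) (started s) (fired s) (viewSig s) (voteSig s)
    (seenQC s) (seenVC s).

Definition tick (s : State n) (d : R) : State n :=
  mkState (now s + d)%R (fun q => clk s q + d)%R (cur s) (started s) (fired s)
    (viewSig s) (voteSig s) (seenQC s) (seenVC s).

Definition enter (s : State n) (p : 'I_n) (w : nat) (c : R) : State n :=
  mkState (now s) (upd (clk s) p (Rmax (clk s p) c)) (upd (cur s) p w)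
    (upd (started s) p true) (fired s) (viewSig s) (voteSig s)
    (seenQC s) (seenVC s).

Definition correct (p : 'I_n) : Prop := p \notin B.

Inductive step : State n -> label n -> State n -> Prop :=
(* time passes; it may not skip past (or leave pending) a time-triggered
   event of rule (a) of a correct processor *)
| StTick s d :
    (0 <= d)%R ->
    (forall p w, correct p -> initial k w ->
        ~ (clk s p = cv Gamma w /\ fired s p w = false)) ->
    (forall p w, correct p -> initial k w ->
        ~ (clk s p < cv Gamma w < clk s p + d)%R) ->
    step s Silent (tick s d)
(* rule (a): c(p) = c_w for initial w: enter w and send (sign) "view w" *)
| StTimer s p w :
    correct p -> initial k w -> clk s p = cv Gamma w -> fired s p w = false ->
    step s (Enter p w)
      (mkState (now s) (clk s) (upd (cur s) p w) (upd (started s) p true)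
         (upd2 (fired s) p w true) (sign (viewSig s) p w (now s)) (voteSig s)
         (seenQC s) (seenVC s))
(* underlying protocol: a correct processor contributes to a QC only for its
   current view, and only once it is in a view *)
| StVote s p :
    correct p -> started s p ->
    step s Silent
      (mkState (now s) (clk s) (cur s) (started s) (fired s) (viewSig s)
         (sign (voteSig s) p (cur s p) (now s)) (seenQC s) (seenVC s))
| StByzView s q w :
    q \in B ->
    step s Silent
      (mkState (now s) (clk s) (cur s) (started s) (fired s)
         (sign (viewSig s) q w (now s)) (voteSig s) (seenQC s) (seenVC s))
| StByzVote s q w :
    q \in B ->
    step s Silent
      (mkState (now s) (clk s) (cur s) (started s) (fired s) (viewSig s)
         (sign (voteSig s) q w (now s)) (seenQC s) (seenVC s))
(* rule (b): first sight of a QC for w >= current view: enter w+1 *)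
| StQCEnter s p w :
    correct p -> seenQC s p w = false -> QC_avail s w -> (cur s p <= w)%N ->
    step s (Enter p w.+1)
      (let s1 := enter s p w.+1 (cv Gamma w.+1) in
       mkState (now s1) (clk s1) (cur s1) (started s1) (fired s1) (viewSig s1)
         (voteSig s1) (upd2 (seenQC s1) p w true) (seenVC s1))
| StQCIgnore s p w :
    correct p -> seenQC s p w = false -> QC_avail s w -> (w < cur s p)%N ->
    step s Silent
      (mkState (now s) (clk s) (cur s) (started s) (fired s) (viewSig s)
         (voteSig s) (upd2 (seenQC s) p w true) (seenVC s))
(* rule (c)/(d): first sight of a VC for initial w > current view: enter w *)
| StVCEnter s p w :
    correct p -> initial k w -> seenVC s p w = false -> VC_avail s w ->
    (cur s p < w)%N ->
    step s (Enter p w)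
      (let s1 := enter s p w (cv Gamma w) in
       mkState (now s1) (clk s1) (cur s1) (started s1) (fired s1) (viewSig s1)
         (voteSig s1) (seenQC s1) (upd2 (seenVC s1) p w true))
| StVCIgnore s p w :
    correct p -> initial k w -> seenVC s p w = false -> VC_avail s w ->
    (w <= cur s p)%N ->
    step s Silent
      (mkState (now s) (clk s) (cur s) (started s) (fired s) (viewSig s)
         (voteSig s) (seenQC s) (upd2 (seenVC s) p w true)).

Definition init_state (s : State n) : Prop :=
  now s = 0%R /\
  (forall p, correct p -> (clk s p <= 0)%R) /\
  (forall p, correct p -> exists S : {set 'I_n}, ((tf n).+1 <= #|S|)%N /\
       forall q, q \in S -> correct q /\ (clk s p - Gamma <= clk s q)%R) /\
  (forall p, cur s p = 0%N) /\ (forall p, started s p = false) /\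
  (forall p w, fired s p w = false) /\
  (forall p w, viewSig s p w = None) /\ (forall p w, voteSig s p w = None) /\
  (forall p w, seenQC s p w = false) /\ (forall p w, seenVC s p w = false).

Definition execution (s : nat -> State n) (lab : nat -> label n) : Prop :=
  init_state (s 0%N) /\ forall i, step (s i) (lab i) (s i.+1).

Definition enters (s : nat -> State n) (lab : nat -> label n) (p : 'I_n)
  (w : nat) (tau : R) : Prop :=
  exists i, lab i = Enter p w /\ now (s i) = tau.

Definition first_entry_time (s : nat -> State n) (lab : nat -> label n)
  (v : nat) (tau : R) : Prop :=
  (exists p w, correct p /\ (v <= w)%N /\ enters s lab p w tau) /\
  (forall p w tau', correct p -> (v <= w)%N -> enters s lab p w tau' -> (tau <= tau')%R).

End Fever.

(* Main.v *)
Require Import Defs.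
From mathcomp Require Import all_boot.
From Stdlib Require Import Reals.
From Stdlib Require Import Lra Lia.
From mathcomp Require Import zify.
Set Implicit Arguments.
Unset Strict Implicit.

Ltac dest :=
  unfold sign in *; unfold upd2, upd in *;
  repeat match goal with
  | H : context[if ?c then _ else _] |- _ => let E := fresh "E" in destruct c eqn:E
  | |- context[if ?c then _ else _] => let E := fresh "E" in destruct c eqn:E
  end;
  repeat match goal with
  | H : (_ && _) = true |- _ => move/andP: H => [? ?]
  | H : is_true (_ && _) |- _ => move/andP: H => [? ?]
  | H : (_ == _) = true |- _ => move/eqP: H => ?
  | H : is_true (_ == _) |- _ => move/eqP: H => ?
  end; subst.

Lemma L0 n k Gamma (B : {set 'I_n}) (a b : State n) l :
  step k Gamma B a l b -> (now a <= now b)%R.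
Proof. case; intros; simpl; lra. Qed.

Lemma L1 n k Gamma (B : {set 'I_n}) (a b : State n) l p w :
  step k Gamma B a l b -> fired b p w = true -> fired a p w = true \/ l = Enter p w.
Proof.
case; intros; simpl in *; dest; auto.
Qed.

Lemma L2 n k Gamma (B : {set 'I_n}) (a b : State n) l p :
  step k Gamma B a l b -> started b p = true ->
  (started a p = true /\ cur b p = cur a p) \/ l = Enter p (cur b p).
Proof.
case; intros; simpl in *; dest; auto.
Qed.

Lemma L3 n k Gamma (B : {set 'I_n}) (a b : State n) l p w x :
  step k Gamma B a l b -> correct B p -> viewSig b p w = Some x ->
  viewSig a p w = Some x \/ (l = Enter p w /\ x = now a).
Proof.
case; intros; simpl in *; dest; auto.
all: try (match goal with h : is_true (?q \in ?S) |- _ => by move: (H); rewrite /correct h end).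
all: try (destruct (viewSig _ _ _); [left; congruence| right; split; congruence]).
Qed.

Lemma L4 n k Gamma (B : {set 'I_n}) (a b : State n) l p w x :
  step k Gamma B a l b -> correct B p -> voteSig b p w = Some x ->
  voteSig a p w = Some x \/ (started a p = true /\ cur a p = w /\ x = now a).
Proof.
case; intros; simpl in *; dest; auto.
all: try (match goal with h : is_true (?q \in ?S) |- _ => by move: (H); rewrite /correct h end).
all: try (destruct (voteSig _ _ _); [left; congruence| right; split; [done|split; congruence]]).
Qed.

Lemma cv_le Gamma w v : (0 <= Gamma)%R -> (w <= v)%coq_nat -> (cv Gamma w <= cv Gamma v)%R.
Proof. move=> HG Hw; rewrite /cv; apply Rmult_le_compat_l => //; exact: le_INR. Qed.

Lemma cv_lt Gamma w v : (0 < Gamma)%R -> (w < v)%coq_nat -> (cv Gamma w < cv Gamma v)%R.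
Proof. move=> HG Hw; rewrite /cv; apply Rmult_lt_compat_l => //; exact: lt_INR. Qed.

Lemma L5 n k Gamma (B : {set 'I_n}) (a b : State n) l v t :
  step k Gamma B a l b -> initial k v -> (0 < Gamma)%R ->
  (forall p, correct B p -> fired a p v = true -> (t <= now a)%R) ->
  (forall w, (v <= w)%coq_nat -> QC_avail a w -> (now a <= t)%R -> False) ->
  (forall w, (v <= w)%coq_nat -> initial k w -> VC_avail a w -> (now a <= t)%R -> False) ->
  (now b <= t)%R -> (forall p, correct B p -> (clk a p <= cv Gamma v)%R) ->
  forall p, correct B p -> (clk b p <= cv Gamma v)%R.
Proof.
move=> st Hv HG Hf Hqc Hvc Hnow Hc p Hp.
case: st Hf Hqc Hvc Hnow Hc => /=.
- move=> s d Hd H1 H2 Hf Hqc Hvc Hnow Hc.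
  destruct (Rle_or_lt (clk s p + d) (cv Gamma v)) as [ok|bad]; first done.
  exfalso. have Hcp := Hc p Hp.
  destruct (Rle_lt_or_eq_dec _ _ Hcp) as [lt|eq].
  + by apply: (H2 p v Hp Hv); lra.
  + case Ef: (fired s p v).
    * have := Hf p Hp Ef. lra.
    * by apply: (H1 p v Hp Hv).
- by intros; auto.
- by intros; auto.
- by intros; auto.
- by intros; auto.
- move=> s p0 w Hp0 _ HQ Hw Hf Hqc Hvc Hnow Hc.
  rewrite /upd; case: ifP => [_|_]; last by auto.
  apply: Rmax_lub; first by auto.
  destruct (Compare_dec.le_lt_dec w.+1 v) as [le|gt].
  + apply: cv_le; lra || done.
  + exfalso; apply: (Hqc w); [lia|done|done].
- by intros; auto.
- move=> s p0 w Hp0 Hiw _ HV Hw Hf Hqc Hvc Hnow Hc.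
  rewrite /upd; case: ifP => [_|_]; last by auto.
  apply: Rmax_lub; first by auto.
  destruct (Compare_dec.le_lt_dec w v) as [le|gt].
  + apply: cv_le; lra || done.
  + exfalso; apply: (Hvc w); [lia|done|done|done].
- by intros; auto.
Qed.

Lemma L6 n k Gamma (B : {set 'I_n}) (a b : State n) l p w v t :
  step k Gamma B a l b -> l = Enter p w -> (v < w)%coq_nat -> (0 < Gamma)%R ->
  (clk a p <= cv Gamma v)%R ->
  (forall w, (v <= w)%coq_nat -> QC_avail a w -> (now a <= t)%R -> False) ->
  (forall w, (v <= w)%coq_nat -> initial k w -> VC_avail a w -> (now a <= t)%R -> False) ->
  (now a <= t)%R -> False.
Proof.
move=> st El Hvw HG Hc Hqc Hvc Hnow.
case: st El Hc Hqc Hvc Hnow => //=.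
- move=> s p0 w0 _ _ Hclk _ [? ?] Hc _ _ _; subst.
  have := @cv_lt Gamma v w HG Hvw. lra.
- move=> s p0 w0 _ _ HQ _ [? E] _ Hqc _ Hnow. subst w.
  apply: (Hqc w0); [lia|done|done].
- move=> s p0 w0 _ Hi _ HV _ [? E] _ _ Hvc Hnow. subst w.
  apply: (Hvc w0); [lia|done|done|done].
Qed.

Lemma correct_in n (B S : {set 'I_n}) : (#|B| < #|S|)%coq_nat -> exists q, q \in S /\ correct B q.
Proof.
move=> H.
have HS : ~~ (S \subset B).
  apply/negP => /subset_leq_card /leP. lia.
case/subsetPn: HS => q qS qB; by exists q.
Qed.

Theorem lemma2 (n k : nat) (Gamma Delta : R) (B : {set 'I_n})
  (Hn : (0 < n)%N) (Hk : (3 <= k)%N)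
  (HDelta : (0 < Delta)%R) (HGamma : (2 * Delta <= Gamma)%R)
  (HB : (#|B| <= tf n)%N)
  (s : nat -> State n) (lab : nat -> label n)
  (Hexec : execution k Gamma B s lab)
  (v : nat) (Hv : initial k v) (t : R)
  (Hfirst : first_entry_time B s lab v t) :
  (exists p, correct B p /\ enters s lab p v t) /\
  (forall p w, correct B p -> (v < w)%N -> ~ enters s lab p w t) /\
  (forall i p, correct B p -> now (s i) = t -> (clk (s i) p <= cv Gamma v)%R).
Proof.
have HG : (0 < Gamma)%R by lra.
case: Hexec => Hinit Hstep.
move: Hinit; rewrite /init_state => -[Hnow0 [Hclk0 [_ [Hcur0 [Hst0 [Hfi0 [Hvi0 [Hvo0 _]]]]]]]].
case: Hfirst => Hex Hmin.
have Mono : forall j i, (j <= i)%coq_nat -> (now (s j) <= now (s i))%R.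
  move=> j i; elim: i => [|i IH] Hji.
  - have -> : j = 0%N by lia. lra.
  - destruct (Nat.eq_dec j i.+1) as [->|ne]; first lra.
    have := L0 (Hstep i). have := IH ltac:(lia). lra.
have Fi : forall i p w, fired (s i) p w = true -> exists j, (j < i)%coq_nat /\ lab j = Enter p w.
  elim=> [|i IH] p w H; first by rewrite Hfi0 in H.
  case: (L1 (Hstep i) H) => [/IH [j [? ?]]|E]; [exists j; split=>//; lia | exists i; split=>//; lia].
have St : forall i p, started (s i) p = true -> exists j, (j < i)%coq_nat /\ lab j = Enter p (cur (s i) p).
  elim=> [|i IH] p H; first by rewrite Hst0 in H.
  case: (L2 (Hstep i) H) => [[/IH [j [? ?]] ->]|E]; [exists j; split=>//; lia | exists i; split=>//; lia].
have Vi : forall i p w x, correct B p -> viewSig (s i) p w = Some x ->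
    exists j, (j < i)%coq_nat /\ lab j = Enter p w /\ (now (s j) <= x)%R.
  elim=> [|i IH] p w x Hp H; first by rewrite Hvi0 in H.
  case: (L3 (Hstep i) Hp H) => [/(IH _ _ _ Hp) [j [? ?]]|[E ->]].
  + exists j; split=>//; lia.
  + exists i; split; [lia|split=>//; lra].
have Vo : forall i p w x, correct B p -> voteSig (s i) p w = Some x ->
    exists j, (j < i)%coq_nat /\ lab j = Enter p w /\ (now (s j) <= x)%R.
  elim=> [|i IH] p w x Hp H; first by rewrite Hvo0 in H.
  case: (L4 (Hstep i) Hp H) => [/(IH _ _ _ Hp) [j [? ?]]|[Hs [E ->]]].
  + exists j; split=>//; lia.
  + case: (St i p Hs) => j [Hj Ej]. rewrite E in Ej.
    exists j; split; [lia|split=>//]. apply: Mono; lia.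
have Hmin' : forall j p w, correct B p -> (v <= w)%coq_nat -> lab j = Enter p w -> (t <= now (s j))%R.
  move=> j p w Hp Hw E. apply: (Hmin p w (now (s j)) Hp (introT leP Hw)). by exists j.
have HtfB : (#|B| < n - tf n)%coq_nat.
  have : (#|B| <= tf n)%coq_nat by apply/leP.
  rewrite /tf. move: Hn => /ltP Hn'. lia.
have QCno : forall i w, (v <= w)%coq_nat -> QC_avail (s i) w -> (now (s i) <= t)%R -> False.
  move=> i w Hw [S [HS HS']] Hi.
  case: (@correct_in n B S ltac:(lia)) => q [qS Hq].
  move: (HS' q qS); rewrite /signed_before.
  case E: (voteSig (s i) q w) => [x|] // Hx.
  case: (Vo i q w x Hq E) => j [_ [Ej Hj]].
  have := Hmin' j q w Hq Hw Ej. lra.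
have VCno : forall i w, (v <= w)%coq_nat -> initial k w -> VC_avail (s i) w -> (now (s i) <= t)%R -> False.
  move=> i w Hw _ [S [HS HS']] Hi.
  have HBS : (#|B| < #|S|)%coq_nat by (have : (#|B| <= tf n)%coq_nat by apply/leP); lia.
  case: (@correct_in n B S HBS) => q [qS Hq].
  move: (HS' q qS); rewrite /signed_before.
  case E: (viewSig (s i) q w) => [x|] // Hx.
  case: (Vi i q w x Hq E) => j [_ [Ej Hj]].
  have := Hmin' j q w Hq Hw Ej. lra.
have Clk : forall i, (now (s i) <= t)%R -> forall p, correct B p -> (clk (s i) p <= cv Gamma v)%R.
  elim=> [|i IH] Hi p Hp.
  - have := Hclk0 p Hp. have : (0 <= cv Gamma v)%R.
      rewrite /cv; apply: Rmult_le_pos; [lra | apply: pos_INR].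
    lra.
  - have Hi' : (now (s i) <= t)%R by have := L0 (Hstep i); lra.
    refine (L5 (Hstep i) Hv HG _ _ _ Hi (IH Hi') Hp).
    + move=> q Hq /(Fi i) [j [Hj Ej]].
      have := Hmin' j q v Hq (le_n v) Ej. have := Mono j i ltac:(lia). lra.
    + move=> w Hw HQ Hn2; exact: (QCno i w Hw HQ Hn2).
    + move=> w Hw Hiw HV Hn2; exact: (VCno i w Hw Hiw HV Hn2).
have Two : forall p w, correct B p -> (v < w)%N -> ~ enters s lab p w t.
  move=> p w Hp /ltP Hvw [j [Ej Hj]].
  have Hj' : (now (s j) <= t)%R by lra.
  apply: (L6 (Hstep j) Ej _ HG (Clk j Hj' p Hp) _ _ Hj').
  + done.
  + move=> w' Hw HQ Hn2; exact: (QCno j w' Hw HQ Hn2).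
  + move=> w' Hw Hiw HV Hn2; exact: (VCno j w' Hw Hiw HV Hn2).
split; last split.
- case: Hex => p [w [Hp [Hw He]]].
  exists p; split=>//.
  destruct (Nat.eq_dec v w) as [->|ne]; first done.
  exfalso; apply: (Two p w Hp _ He). move/leP: Hw => Hw. apply/ltP; lia.
- exact: Two.
- move=> i p Hp Hi. apply: Clk => //. lra.
Qed.
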